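(* An $L$-layer RNN with $H$ heads, hidden dimension $m$ and precision $p$ cannot solve the function evaluation task $\mathsf{Eva}$ on $[n]$ whenever $LHmp<n\log n$. The same holds for RNNs with chain-of-thought.
   Context: Function evaluation $\mathsf{Eva}(f,x)$: the input is a function $f:[n]\to[n]$, given as $n$ tokens encoding $f(1),\dots,f(n)$, followed by one token encoding $x\in[n]$. The required output is $f(x)$. RNN layer (one head) with hidden dimension $m$ and precision $p$: given inputs $x_1,x_2,\dots$, one fixes $\mathrm{h}_0\in\mathbb{R}^m$ and computes $\mathrm{h}_i=g_{(i)}(x_i,\mathrm{h}_{i-1})\in\mathbb{R}^m$ and $y_i=f_{(i)}(x_i,\mathrm{h}_i)$ for arbitrary functions $g_{(i)},f_{(i)}$. The hidden states are represented with $p$-bit numbers. An $L$-layer RNN with $H$ heads has $L$ layers, each consisting of $H$ such heads in parallel with concatenated outputs, interleaved with arbitrary position-wise maps. With chain-of-thought, the model, after reading the input, autoregressively generates additional tokens (each appended as a new input position), and the answer is read from the generated tokens. *)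

(* Defs.v *)
From mathcomp Require Import all_boot.
From Stdlib Require Import Reals.
Set Implicit Arguments. Unset Strict Implicit. Unset Printing Implicit Defensive.

(* A hidden state: m numbers, each of precision p (p bits). *)
Definition Hid (m p : nat) := m.-tuple (p.-tuple bool).

(* One RNN head over values of type V:  h_i = g_(i)(x_i, h_{i-1}),
   y_i = f_(i)(x_i, h_i); positions are numbered from 1. *)
Record head (V : Type) (m p : nat) := Head {
  h_init : Hid m p;
  h_upd  : nat -> V -> Hid m p -> Hid m p;
  h_out  : nat -> V -> Hid m p -> V }.

(* A layer: H heads in parallel, outputs concatenated, then an arbitrary
   position-wise map. *)
Record layer (V : Type) (H m p : nat) := Layer {
  l_heads : 'I_H -> head V m p;
  l_mix   : ('I_H -> V) -> V }.

Fixpoint run_layer_aux V H m p (ly : layer V H m p) (i : nat)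
    (hs : 'I_H -> Hid m p) (xs : seq V) : seq V :=
  match xs with
  | [::] => [::]
  | x :: xs' =>
      let hs' := fun j => h_upd (l_heads ly j) i x (hs j) in
      l_mix ly (fun j => h_out (l_heads ly j) i x (hs' j))
        :: run_layer_aux ly i.+1 hs' xs'
  end.

Definition run_layer V H m p (ly : layer V H m p) (xs : seq V) : seq V :=
  run_layer_aux ly 1 (fun j => h_init (l_heads ly j)) xs.

Record rnn (Tok V : Type) (L H m p : nat) := RNN {
  r_embed  : Tok -> V;
  r_layers : L.-tuple (layer V H m p) }.

Definition run_rnn Tok V L H m p (M : rnn Tok V L H m p) (toks : seq Tok)
  : seq V :=
  foldl (fun xs ly => run_layer ly xs) (map (r_embed M) toks) (r_layers M).

(* Output at the last position (default irrelevant on nonempty inputs). *)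
Definition last_out Tok V L H m p (M : rnn Tok V L H m p) (d : Tok)
    (toks : seq Tok) : V :=
  last (r_embed M d) (run_rnn M toks).

Definition eva_input (n : nat) (Tok : Type) (encF encX : 'I_n -> Tok)
    (f : 'I_n -> 'I_n) (x : 'I_n) : seq Tok :=
  [seq encF (f i) | i <- enum 'I_n] ++ [:: encX x].

Definition solves_eva n Tok V L H m p (encF encX : 'I_n -> Tok)
    (M : rnn Tok V L H m p) (out : V -> 'I_n) : Prop :=
  forall (f : 'I_n -> 'I_n) (x : 'I_n),
    out (last_out M (encX x) (eva_input encF encX f x)) = f x.

Fixpoint cot_gen Tok V L H m p (M : rnn Tok V L H m p) (next : V -> Tok)
    (d : Tok) (T : nat) (toks : seq Tok) : seq Tok :=
  match T with
  | 0 => toks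
  | T'.+1 => cot_gen M next d T' (rcons toks (next (last_out M d toks)))
  end.

Definition solves_eva_cot n Tok V L H m p (encF encX : 'I_n -> Tok)
    (M : rnn Tok V L H m p) (next : V -> Tok) (T : nat)
    (dec : seq Tok -> 'I_n) : Prop :=
  forall (f : 'I_n -> 'I_n) (x : 'I_n),
    dec (drop n.+1 (cot_gen M next (encX x) T (eva_input encF encX f x)))
      = f x.

Definition log2 (r : R) : R := (ln r / ln 2)%R.

(* Main.v *)
Require Import Defs.
From mathcomp Require Import all_boot.
From mathcomp Require Import zify.
From Stdlib Require Import Reals Lra FunctionalExtensionality.
From Stdlib Require Import Lia.
Set Implicit Arguments. Unset Strict Implicit.

Section Aux.
Variables (V : Type) (H m p : nat).

Fixpoint fin_state (ly : layer V H m p) (i : nat) (hs : 'I_H -> Hid m p)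
    (xs : seq V) : 'I_H -> Hid m p :=
  match xs with
  | [::] => hs
  | x :: xs' => fin_state ly i.+1 (fun j => h_upd (l_heads ly j) i x (hs j)) xs'
  end.

Lemma run_layer_aux_cat (ly : layer V H m p) i hs xs ys :
  run_layer_aux ly i hs (xs ++ ys) =
  run_layer_aux ly i hs xs ++ run_layer_aux ly (i + size xs) (fin_state ly i hs xs) ys.
Proof.
elim: xs i hs => [|x xs IH] i hs /=; first by rewrite addn0.
by rewrite IH addSnnS.
Qed.

Lemma size_run_layer_aux (ly : layer V H m p) i hs xs : size (run_layer_aux ly i hs xs) = size xs.
Proof. by elim: xs i hs => [|x xs IH] i hs //=; rewrite IH. Qed.

Definition FH := {ffun 'I_H -> m.-tuple (p.-tuple bool)}.

Fixpoint states (lys : seq (layer V H m p)) (xs : seq V) : seq FH :=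
  match lys with
  | [::] => [::]
  | ly :: lys' =>
      [ffun j => fin_state ly 1 (fun j => h_init (l_heads ly j)) xs j]
        :: states lys' (run_layer ly xs)
  end.

Fixpoint cont (lys : seq (layer V H m p)) (i : nat) (sts : seq FH) (ys : seq V)
  : seq V :=
  match lys, sts with
  | ly :: lys', s :: sts' => cont lys' i sts' (run_layer_aux ly i (fun j => s j) ys)
  | _, _ => ys
  end.

Lemma size_cont (lys : seq (layer V H m p)) i sts ys : size (cont lys i sts ys) = size ys.
Proof.
elim: lys sts ys => [|ly lys IH] [|s sts] ys //=.
by rewrite IH size_run_layer_aux.
Qed.

Lemma size_states (lys : seq (layer V H m p)) xs : size (states lys xs) = size lys.
Proof. by elim: lys xs => [|ly lys IH] xs //=; rewrite IH. Qed.

Lemma fold_cat (lys : seq (layer V H m p)) xs ys :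
  foldl (fun xs ly => run_layer ly xs) (xs ++ ys) lys =
  foldl (fun xs ly => run_layer ly xs) xs lys
    ++ cont lys (size xs).+1 (states lys xs) ys.
Proof.
elim: lys xs ys => [|ly lys IH] xs ys //=.
rewrite [run_layer ly (xs ++ ys)]/run_layer run_layer_aux_cat IH.
have -> : (fun j => [ffun j => fin_state ly 1 (fun j0 => h_init (l_heads ly j0)) xs j] j)
   = fin_state ly 1 (fun j0 => h_init (l_heads ly j0)) xs.
  by apply: functional_extensionality => j; rewrite ffunE.
by rewrite /run_layer size_run_layer_aux add1n.
Qed.

Lemma size_fold (lys : seq (layer V H m p)) xs :
  size (foldl (fun xs ly => run_layer ly xs) xs lys) = size xs.
Proof.
by elim: lys xs => [|ly lys IH] xs //=; rewrite IH /run_layer size_run_layer_aux.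
Qed.

End Aux.

Section Rnn.
Variables (Tok V : Type) (L H m p : nat).

Definition St (M : rnn Tok V L H m p) (pre : seq Tok) : seq (FH H m p) :=
  states (r_layers M) (map (r_embed M) pre).

Lemma run_rnn_cat (M : rnn Tok V L H m p) pre ys :
  run_rnn M (pre ++ ys) =
  run_rnn M pre ++ cont (r_layers M) (size pre).+1 (St M pre) (map (r_embed M) ys).
Proof. by rewrite /run_rnn map_cat fold_cat size_map. Qed.

Lemma last_out_same (M : rnn Tok V L H m p) d pre1 pre2 ys :
  size pre1 = size pre2 -> St M pre1 = St M pre2 -> ys <> [::] ->
  last_out M d (pre1 ++ ys) = last_out M d (pre2 ++ ys).
Proof.
move=> Hs Hst Hy; rewrite /last_out !run_rnn_cat Hs Hst !last_cat.
have : size (cont (r_layers M) (size pre2).+1 (St M pre2) [seq r_embed M i | i <- ys])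
   = size ys by rewrite size_cont size_map.
case: (cont _ _ _ _) => [|c C] //=.
by case: ys Hy.
Qed.

Lemma cot_same (M : rnn Tok V L H m p) next d pre1 pre2 :
  size pre1 = size pre2 -> St M pre1 = St M pre2 ->
  forall T ys, ys <> [::] -> exists zs,
    cot_gen M next d T (pre1 ++ ys) = pre1 ++ zs /\
    cot_gen M next d T (pre2 ++ ys) = pre2 ++ zs.
Proof.
move=> Hs Hst T; elim: T => [|T IH] ys Hy /=; first by exists ys.
rewrite (last_out_same d Hs Hst Hy) !rcons_cat.
apply: IH; by case: ys Hy.
Qed.

Lemma size_St (M : rnn Tok V L H m p) pre : size (St M pre) == L.
Proof. by rewrite /St size_states size_tuple. Qed.

Definition Phi (M : rnn Tok V L H m p) pre : L.-tuple (FH H m p) :=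
  Tuple (size_St M pre).

End Rnn.

Lemma expn_pow a b : expn a b = Nat.pow a b.
Proof. elim: b => [|b IH] //=. by rewrite expnS IH. Qed.

Lemma ln_le' (x y : R) : (0 < x)%R -> (x <= y)%R -> (ln x <= ln y)%R.
Proof.
move=> Hx [Hxy|->]; last by right.
by left; apply: ln_increasing.
Qed.

Lemma real_contra (n K : nat) :
  (expn n n <= expn 2 K)%N -> ~ (INR K < INR n * log2 (INR n))%R.
Proof.
move=> Hle Hlt.
case: n Hle Hlt => [|n] Hle Hlt.
  have := pos_INR K; rewrite /= in Hlt; lra.
have Hn : (1 <= INR n.+1)%R by apply: (le_INR 1); apply/leP.
have HnK : (INR (Nat.pow n.+1 n.+1) <= INR (Nat.pow 2 K))%R.
  apply: le_INR; apply/leP; by rewrite -!expn_pow.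
rewrite !pow_INR in HnK.
replace (INR 2) with 2%R in HnK by (simpl; lra).
have Hln := ln_le' (pow_lt (INR n.+1) n.+1 ltac:(lra)) HnK.
rewrite !ln_pow in Hln; try lra.
have Hl2 : (0 < ln 2)%R by have := ln_lt_2; lra.
have H0 : (0 <= ln (INR n.+1))%R.
  rewrite -ln_1; apply: ln_le'; lra.
move: Hlt; rewrite /log2.
have : (INR n.+1 * (ln (INR n.+1) / ln 2) <= INR K)%R.
  replace (INR n.+1 * (ln (INR n.+1) / ln 2))%R
    with ((INR n.+1 * ln (INR n.+1)) * / ln 2)%R by (field; lra).
  replace (INR K) with ((INR K * ln 2) * / ln 2)%R by (field; lra).
  apply: Rmult_le_compat_r; last by [].
  by left; apply: Rinv_0_lt_compat.
lra.
Qed.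

Theorem theoremA4 (n L H m p : nat) (Tok V : Type) (encF encX : 'I_n -> Tok)
    (M : rnn Tok V L H m p) :
  (INR (L * H * m * p) < INR n * log2 (INR n))%R ->
  (forall out : V -> 'I_n, ~ solves_eva encF encX M out) /\
  (forall (next : V -> Tok) (T : nat) (dec : seq Tok -> 'I_n),
      ~ solves_eva_cot encF encX M next T dec).
Proof.
move=> Hlt.
pose pre (F : {ffun 'I_n -> 'I_n}) := [seq encF (F i) | i <- enum 'I_n].
have Hsz F G : size (pre F) = size (pre G) by rewrite !size_map.
suff Hcount : forall P : {ffun 'I_n -> 'I_n} -> 'I_n -> Prop,
    (forall F G, Phi M (pre F) = Phi M (pre G) -> forall x, P F x -> P G x -> F x = G x) ->
    (forall F x, P F x) -> False.
  split.
  - move=> out Hs; apply: (Hcount (fun _ _ => True)) => // F G E x _ _.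
    have St_eq : St M (pre F) = St M (pre G) by have := congr1 val E.
    rewrite -(Hs F x) -(Hs G x) /eva_input.
    by rewrite (last_out_same _ (Hsz F G) St_eq).
  - move=> next T dec Hs; apply: (Hcount (fun _ _ => True)) => // F G E x _ _.
    have St_eq : St M (pre F) = St M (pre G) by have := congr1 val E.
    rewrite -(Hs F x) -(Hs G x) /eva_input.
    have [zs [-> ->]] := cot_same next (encX x) (Hsz F G) St_eq T (ys:=[:: encX x]) ltac:(by []).
    have Hp K : size (pre K) = n by rewrite size_map size_enum_ord.
    by rewrite !drop_cat !Hp ltnNge leqnSn.
move=> P Hinj Hall.
have inj : injective (fun F => Phi M (pre F)).
  move=> F G E; apply/ffunP => x; exact: Hinj E x (Hall F x) (Hall G x).
have := leq_card _ inj.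
rewrite card_ffun !card_ord card_tuple card_ffun card_ord card_tuple card_tuple card_bool.
rewrite -!expnM => Hle.
apply: (real_contra (K := L * H * m * p)) Hlt.
move: Hle; congr (_ <= expn 2 _)%N.
by rewrite -!mulnA; lia.
Qed.
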